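(* Let $\mathbf p$ be an agreeable memory-one strategy for X and write its X Press-Dyson vector as $\tilde{\mathbf p}=\mathbf p-(1,1,0,0)=\alpha\mathbf S_X+\beta\mathbf S_Y+\gamma\mathbf 1+\delta\mathbf e_{23}$, where $\mathbf 1=(1,1,1,1)$ and $\mathbf e_{23}=(0,1,1,0)$. Assume $(\alpha,\beta,\gamma,\delta)\neq(0,0,0,0)$ (i.e. $\mathbf p\ne(1,1,0,0)$). Then $\mathbf p$ is of Nash type if and only if $$\max\Big(\frac{\delta}{T-S},\ \frac{\delta}{2R-(T+S)}\Big)\le\alpha,$$ and $\mathbf p$ is good if and only if this inequality is strict.
   Context: Iterated Prisoner's Dilemma: payoffs $T>R>P>S$ with $2R>T+S$; outcomes of a round are ordered $cc,cd,dc,dd$ (first letter X's play, second Y's; $c$ = cooperate, $d$ = defect); payoff vectors $\mathbf S_X=(R,S,T,P)$, $\mathbf S_Y=(R,T,S,P)$. The vectors $\mathbf S_X,\mathbf S_Y,\mathbf 1,\mathbf e_{23}$ form a basis of $\mathbb R^4$. A memory-one strategy for X is $\mathbf p=(p_1,p_2,p_3,p_4)\in[0,1]^4$, where $p_i$ is the probability that X plays $c$ in the next round given that the current round had the $i$-th outcome. A strategy pattern for Y is an arbitrary (possibly randomized and history-dependent) rule for Y's play in each round. Given initial plays and the rules used, let $\mathbf v^n$ be the probability distribution of the outcome of round $n$; a limit distribution is any limit point $\mathbf v$ of the Cesàro averages $\frac1n\sum_{k=1}^n\mathbf v^k$, and the associated expected payoffs are $s_X=\langle\mathbf v\cdot\mathbf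 S_X\rangle$, $s_Y=\langle\mathbf v\cdot\mathbf S_Y\rangle$. $\mathbf p$ is agreeable if $p_1=1$. $\mathbf p$ is of Nash type if it is agreeable and, for every strategy pattern of Y and every associated limit distribution, $s_Y\ge R$ implies $s_Y=R$. $\mathbf p$ is good if it is agreeable and, for every strategy pattern of Y and every associated limit distribution, $s_Y\ge R$ implies $s_Y=s_X=R$. *)

(* Defs.v *)
From Stdlib Require Import Reals List.
Import ListNotations.
Open Scope R_scope.

(* Outcomes of a round, in the order cc, cd, dc, dd (X's play first). *)
Inductive outcome := CC | CD | DC | DD.

Definition all_outcomes : list outcome := [CC; CD; DC; DD].

(* true = cooperate *)
Definition xplay (o : outcome) : bool :=
  match o with CC | CD => true | _ => false end.
Definition yplay (o : outcome) : bool :=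
  match o with CC | DC => true | _ => false end.

Definition bern (a : R) (b : bool) : R := if b then a else 1 - a.

Definition sumR {A} (f : A -> R) (l : list A) : R :=
  fold_right (fun x acc => f x + acc) 0 l.

Definition memory_one (p : outcome -> R) : Prop :=
  forall o, 0 <= p o <= 1.

Definition agreeable (p : outcome -> R) : Prop := p CC = 1.

(* A strategy pattern for Y: a behaviour rule giving the probability that
   Y cooperates next, as a function of the whole past history (list of
   outcomes, most recent first; [] = first round). *)
Definition strategy_pattern (q : list outcome -> R) : Prop :=
  forall h, 0 <= q h <= 1.

(* Probability that the next round has outcome o given history h,
   where x0 is X's initial probability of cooperating. *)
Definition step (p : outcome -> R) (x0 : R) (q : list outcome -> R)
  (h : list outcome) (o : outcome) : R :=
  let px := match h with [] => x0 | o' :: _ => p o' end in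
  bern px (xplay o) * bern (q h) (yplay o).

Fixpoint hist_prob p x0 q (h : list outcome) : R :=
  match h with
  | [] => 1
  | o :: h' => hist_prob p x0 q h' * step p x0 q h' o
  end.

Fixpoint all_hist (n : nat) : list (list outcome) :=
  match n with
  | O => [ [] ]
  | S n' => flat_map (fun h => map (fun o => o :: h) all_outcomes) (all_hist n')
  end.

(* v^{n+1}: distribution of the outcome of round n+1 *)
Definition vround p x0 q (n : nat) (o : outcome) : R :=
  sumR (fun h => hist_prob p x0 q h * step p x0 q h o) (all_hist n).

Definition cesaro p x0 q (n : nat) (o : outcome) : R :=
  sumR (fun k => vround p x0 q k o) (seq 0 (S n)) / INR (S n).

Definition limit_distribution p x0 q (v : outcome -> R) : Prop :=
  forall eps, 0 < eps -> forall N : nat, exists n : nat, (N <= n)%nat /\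
    forall o, Rabs (cesaro p x0 q n o - v o) < eps.

Definition sX (Tp Rp Pp Sp : R) (v : outcome -> R) : R :=
  v CC * Rp + v CD * Sp + v DC * Tp + v DD * Pp.
Definition sY (Tp Rp Pp Sp : R) (v : outcome -> R) : R :=
  v CC * Rp + v CD * Tp + v DC * Sp + v DD * Pp.

Definition nash_type (Tp Rp Pp Sp : R) (p : outcome -> R) : Prop :=
  agreeable p /\
  forall x0 q v, 0 <= x0 <= 1 -> strategy_pattern q ->
    limit_distribution p x0 q v ->
    sY Tp Rp Pp Sp v >= Rp -> sY Tp Rp Pp Sp v = Rp.

Definition good (Tp Rp Pp Sp : R) (p : outcome -> R) : Prop :=
  agreeable p /\
  forall x0 q v, 0 <= x0 <= 1 -> strategy_pattern q ->
    limit_distribution p x0 q v ->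
    sY Tp Rp Pp Sp v >= Rp -> sY Tp Rp Pp Sp v = Rp /\ sX Tp Rp Pp Sp v = Rp.

Definition press_dyson (Tp Rp Pp Sp : R) (p : outcome -> R) (a b g d : R) : Prop :=
  p CC - 1 = a * Rp + b * Rp + g /\
  p CD - 1 = a * Sp + b * Tp + g + d /\
  p DC = a * Tp + b * Sp + g + d /\
  p DD = a * Pp + b * Pp + g.

(* Main.v *)
Require Import Defs.
From Stdlib Require Import Reals Lra Lia List.
Import ListNotations.
Open Scope R_scope.


Lemma sumR_plus {A} (f g : A -> R) l : sumR (fun x => f x + g x) l = sumR f l + sumR g l.
Proof. induction l; simpl; [lra| rewrite IHl; lra]. Qed.
Lemma sumR_scal {A} (c : R) (f : A -> R) l : sumR (fun x => c * f x) l = c * sumR f l.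
Proof. induction l; simpl; [lra| rewrite IHl; lra]. Qed.
Lemma sumR_ext {A} (f g : A -> R) l : (forall x, f x = g x) -> sumR f l = sumR g l.
Proof. intro H; induction l; simpl; [lra| rewrite IHl, H; lra]. Qed.
Lemma sumR_app {A} (f : A -> R) l1 l2 : sumR f (l1 ++ l2) = sumR f l1 + sumR f l2.
Proof. induction l1; simpl; [lra| rewrite IHl1; lra]. Qed.
Lemma sumR_flat_map {A B} (f : B -> R) (g : A -> list B) l :
  sumR f (flat_map g l) = sumR (fun x => sumR f (g x)) l.
Proof. induction l; simpl; [lra| rewrite sumR_app, IHl; lra]. Qed.
Lemma sumR_map {A B} (f : B -> R) (g : A -> B) l : sumR f (map g l) = sumR (fun x => f (g x)) l.
Proof. induction l; simpl; [lra| rewrite IHl; lra]. Qed.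
Lemma sumR_nonneg {A} (f : A -> R) l : (forall x, 0 <= f x) -> 0 <= sumR f l.
Proof. intro H; induction l; simpl; [lra| specialize (H a); lra]. Qed.
Lemma sumR_zero {A} (f : A -> R) l : (forall x, f x = 0) -> sumR f l = 0.
Proof. intro H; induction l; simpl; [lra| rewrite H; lra]. Qed.

Lemma all_hist_S n : all_hist (S n) = flat_map (fun h => map (fun o => o :: h) all_outcomes) (all_hist n).
Proof. reflexivity. Qed.

Lemma hist_step p x0 q k (F : list outcome -> R) :
  sumR (fun h => hist_prob p x0 q h * F h) (all_hist (S k)) =
  sumR (fun h => hist_prob p x0 q h *
     (step p x0 q h CC * F (CC :: h) + step p x0 q h CD * F (CD :: h)
      + step p x0 q h DC * F (DC :: h) + step p x0 q h DD * F (DD :: h))) (all_hist k).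
Proof.
  rewrite all_hist_S, sumR_flat_map. apply sumR_ext; intro h.
  rewrite sumR_map. cbn [sumR fold_right all_outcomes hist_prob]. ring.
Qed.

Lemma step_sum p x0 q h :
  step p x0 q h CC + step p x0 q h CD + step p x0 q h DC + step p x0 q h DD = 1.
Proof. unfold step, bern; simpl. ring. Qed.

Lemma hist_mass p x0 q k : sumR (hist_prob p x0 q) (all_hist k) = 1.
Proof.
  induction k. { simpl. lra. }
  transitivity (sumR (fun h => hist_prob p x0 q h * 1) (all_hist (S k))).
  { apply sumR_ext; intro; ring. }
  rewrite hist_step. transitivity (sumR (hist_prob p x0 q) (all_hist k)); [|exact IHk].
  apply sumR_ext; intro h. pose proof (step_sum p x0 q h). nra.
Qed.

Definition lin (c1 c2 c3 c4 : R) (f : outcome -> R) := c1 * f CC + c2 * f CD + c3 * f DC + c4 * f DD.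

Lemma vround_lin p x0 q k c1 c2 c3 c4 :
  lin c1 c2 c3 c4 (vround p x0 q k) =
  sumR (fun h => hist_prob p x0 q h * lin c1 c2 c3 c4 (step p x0 q h)) (all_hist k).
Proof.
  unfold lin, vround. rewrite <- !sumR_scal, <- !sumR_plus. apply sumR_ext; intro; ring.
Qed.

Lemma vround_mass p x0 q k : lin 1 1 1 1 (vround p x0 q k) = 1.
Proof.
  rewrite vround_lin. transitivity (sumR (hist_prob p x0 q) (all_hist k)); [|apply hist_mass].
  apply sumR_ext; intro h. unfold lin. pose proof (step_sum p x0 q h). nra.
Qed.

Lemma vround_S p x0 q k o' :
  vround p x0 q (S k) o' =
  sumR (fun h => hist_prob p x0 q h *
     (step p x0 q h CC * step p x0 q (CC :: h) o' + step p x0 q h CD * step p x0 q (CD :: h) o'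
      + step p x0 q h DC * step p x0 q (DC :: h) o' + step p x0 q h DD * step p x0 q (DD :: h) o')) (all_hist k).
Proof. unfold vround. apply hist_step. Qed.

Section Nonneg.
Variables (p : outcome -> R) (x0 : R) (q : list outcome -> R).
Hypotheses (Hp : memory_one p) (Hx : 0 <= x0 <= 1) (Hq : strategy_pattern q).

Lemma step_nonneg h o : 0 <= step p x0 q h o.
Proof.
  unfold step, bern. destruct h as [|o' h]; destruct (xplay o), (yplay o);
  try pose proof (Hp o'); pose proof (Hq []); try pose proof (Hq (o'::h)); apply Rmult_le_pos; lra.
Qed.

Lemma hist_nonneg h : 0 <= hist_prob p x0 q h.
Proof. induction h; simpl; [lra|]. apply Rmult_le_pos; auto. apply step_nonneg. Qed.

Lemma vround_nonneg k o : 0 <= vround p x0 q k o.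
Proof. unfold vround. apply sumR_nonneg; intro. apply Rmult_le_pos; [apply hist_nonneg|apply step_nonneg]. Qed.
End Nonneg.


Lemma Xc_S p x0 q k :
  vround p x0 q (S k) CC + vround p x0 q (S k) CD = lin (p CC) (p CD) (p DC) (p DD) (vround p x0 q k).
Proof.
  rewrite !vround_S, <- sumR_plus, vround_lin. apply sumR_ext; intro h.
  unfold lin, step, bern; simpl. ring.
Qed.

Lemma telescope (f : nat -> R) n : sumR (fun k => f (S k) - f k) (seq 0 (S n)) = f (S n) - f O.
Proof.
  induction n. { simpl. ring. }
  rewrite seq_S, sumR_app, IHn. simpl. ring.
Qed.

Lemma cesaro_lin p x0 q n c1 c2 c3 c4 :
  lin c1 c2 c3 c4 (cesaro p x0 q n) = sumR (fun k => lin c1 c2 c3 c4 (vround p x0 q k)) (seq 0 (S n)) / INR (S n).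
Proof.
  unfold lin, cesaro. unfold Rdiv. rewrite !sumR_plus, !sumR_scal. ring.
Qed.

Lemma abs_lin_le c1 c2 c3 c4 d1 d2 d3 d4 eps :
  Rabs d1 < eps -> Rabs d2 < eps -> Rabs d3 < eps -> Rabs d4 < eps ->
  Rabs (c1*d1 + c2*d2 + c3*d3 + c4*d4) <= (Rabs c1 + Rabs c2 + Rabs c3 + Rabs c4) * eps.
Proof.
  intros H1 H2 H3 H4.
  assert (forall c d, Rabs d < eps -> Rabs (c*d) <= Rabs c * eps).
  { intros c d Hd. rewrite Rabs_mult. apply Rmult_le_compat_l; [apply Rabs_pos|lra]. }
  pose proof (H c1 d1 H1); pose proof (H c2 d2 H2); pose proof (H c3 d3 H3); pose proof (H c4 d4 H4).
  pose proof (Rabs_triang (c1*d1 + c2*d2 + c3*d3) (c4*d4)).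
  pose proof (Rabs_triang (c1*d1 + c2*d2) (c3*d3)).
  pose proof (Rabs_triang (c1*d1) (c2*d2)). lra.
Qed.

Lemma lim_lin p x0 q v c1 c2 c3 c4 r B :
  limit_distribution p x0 q v ->
  (forall n, Rabs (lin c1 c2 c3 c4 (cesaro p x0 q n) - r) <= B / INR (S n)) ->
  lin c1 c2 c3 c4 v = r.
Proof.
  intros Hv Hb.
  destruct (Req_dec (lin c1 c2 c3 c4 v) r) as [|Hne]; [assumption| exfalso].
  set (E := Rabs (lin c1 c2 c3 c4 v - r)).
  assert (HE : 0 < E) by (apply Rabs_pos_lt; lra).
  set (K := Rabs c1 + Rabs c2 + Rabs c3 + Rabs c4 + 1).
  assert (HK : 0 < K) by (unfold K; pose proof (Rabs_pos c1); pose proof (Rabs_pos c2);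
     pose proof (Rabs_pos c3); pose proof (Rabs_pos c4); lra).
  assert (HB : 0 <= B).
  { specialize (Hb O). simpl in Hb. pose proof (Rabs_pos (lin c1 c2 c3 c4 (cesaro p x0 q 0) - r)).
    replace (B / 1) with B in Hb by field. lra. }
  destruct (archimed_cor1 (E / (2 * (B + 1)))) as [N [HN HN0]].
  { apply Rdiv_lt_0_compat; lra. }
  destruct (Hv (E / (2 * K)) ltac:(apply Rdiv_lt_0_compat; lra) N) as [n [Hn Hc]].
  pose proof (abs_lin_le c1 c2 c3 c4 _ _ _ _ _ (Hc CC) (Hc CD) (Hc DC) (Hc DD)) as Hl.
  specialize (Hb n).
  assert (HNpos : 0 < INR N) by (apply lt_0_INR; lia).
  assert (HSn : INR N <= INR (S n)) by (apply le_INR; lia).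
  assert (Hbd : B / INR (S n) < E / 2).
  { apply Rle_lt_trans with (B / INR N).
    { unfold Rdiv. apply Rmult_le_compat_l; [lra|]. apply Rinv_le_contravar; lra. }
    assert (Hi : / INR N * (2 * (B+1)) < E).
    { apply Rmult_lt_reg_r with (/ (2 * (B+1))). { apply Rinv_0_lt_compat; lra. }
      replace (/ INR N * (2 * (B + 1)) * / (2 * (B + 1))) with (/ INR N) by (field; lra).
      exact HN. }
    unfold Rdiv. assert (/ INR N * B <= / INR N * (B + 1)).
    { apply Rmult_le_compat_l; [left; apply Rinv_0_lt_compat; lra | lra]. } nra. }
  assert (Hkk : (Rabs c1 + Rabs c2 + Rabs c3 + Rabs c4) * (E / (2 * K)) <= E / 2).
  { replace (E / 2) with (K * (E / (2 * K))) by (field; lra).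
    apply Rmult_le_compat_r; [left; apply Rdiv_lt_0_compat; lra| unfold K; lra]. }
  assert (Heq : lin c1 c2 c3 c4 v - r = (lin c1 c2 c3 c4 (cesaro p x0 q n) - r) -
     (c1 * (cesaro p x0 q n CC - v CC) + c2 * (cesaro p x0 q n CD - v CD) +
      c3 * (cesaro p x0 q n DC - v DC) + c4 * (cesaro p x0 q n DD - v DD))) by (unfold lin; ring).
  assert (Hfin : E <= Rabs (lin c1 c2 c3 c4 (cesaro p x0 q n) - r) +
     Rabs (c1 * (cesaro p x0 q n CC - v CC) + c2 * (cesaro p x0 q n CD - v CD) +
      c3 * (cesaro p x0 q n DC - v DC) + c4 * (cesaro p x0 q n DD - v DD))).
  { unfold E. rewrite Heq. unfold Rminus at 1. rewrite <- (Rabs_Ropp (_ + _ + _ + _)). apply Rabs_triang. }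
  clearbody E K. lra.
Qed.

Lemma lim_nonneg p x0 q v o :
  limit_distribution p x0 q v -> (forall n, 0 <= cesaro p x0 q n o) -> 0 <= v o.
Proof.
  intros Hv H. destruct (Rle_lt_dec 0 (v o)) as [|Hlt]; [assumption|exfalso].
  destruct (Hv (- v o) ltac:(lra) O) as [n [_ Hc]]. specialize (Hc o). specialize (H n).
  apply Rabs_def2 in Hc. lra.
Qed.


Lemma sumR_one {A} (l : list A) : sumR (fun _ => 1) l = INR (length l).
Proof. induction l; simpl length; [simpl; lra|]. rewrite S_INR. simpl sumR. simpl in IHl. lra. Qed.

Lemma ces_bound p x0 q n c1 c2 c3 c4 (f : nat -> R) r B :
  (forall k, lin c1 c2 c3 c4 (vround p x0 q k) = f (S k) - f k) ->
  (forall k, Rabs (f k - r) <= B / 2) ->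
  Rabs (lin c1 c2 c3 c4 (cesaro p x0 q n) - 0) <= B / INR (S n).
Proof.
  intros Hf Hr. rewrite cesaro_lin, Rminus_0_r.
  rewrite (sumR_ext _ (fun k => f (S k) - f k)) by apply Hf. rewrite telescope.
  assert (HS : 0 < INR (S n)) by (apply lt_0_INR; lia).
  unfold Rdiv. rewrite Rabs_mult, (Rabs_right (/ _)) by (left; apply Rinv_0_lt_compat; lra).
  apply Rmult_le_compat_r; [left; apply Rinv_0_lt_compat; lra|].
  pose proof (Hr (S n)); pose proof (Hr O).
  replace (f (S n) - f O) with ((f (S n) - r) - (f O - r)) by ring.
  pose proof (Rabs_triang (f (S n) - r) (- (f O - r))). rewrite Rabs_Ropp in H1.
  unfold Rminus at 1. lra.
Qed.

Section Gen.
Variables (p : outcome -> R) (x0 : R) (q : list outcome -> R).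
Hypotheses (Hp : memory_one p) (Hx : 0 <= x0 <= 1) (Hq : strategy_pattern q).

Lemma cesaro_nonneg n o : 0 <= cesaro p x0 q n o.
Proof.
  unfold cesaro. apply Rmult_le_pos. apply sumR_nonneg; intro; apply vround_nonneg; auto.
  left; apply Rinv_0_lt_compat, lt_0_INR; lia.
Qed.

Lemma cesaro_mass n : lin 1 1 1 1 (cesaro p x0 q n) = 1.
Proof.
  rewrite cesaro_lin. rewrite (sumR_ext _ (fun _ => 1)) by (intro; apply vround_mass).
  rewrite sumR_one, length_seq. field. apply not_0_INR; lia.
Qed.

Variable v : outcome -> R.
Hypothesis Hv : limit_distribution p x0 q v.

Lemma lim_nonneg' o : 0 <= v o.
Proof. apply (lim_nonneg p x0 q); auto. intro; apply cesaro_nonneg. Qed.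

Lemma lim_mass : lin 1 1 1 1 v = 1.
Proof. apply (lim_lin p x0 q v _ _ _ _ 1 0 Hv). intro n. rewrite cesaro_mass.
  replace (1-1) with 0 by ring. rewrite Rabs_R0. unfold Rdiv; lra. Qed.

Lemma akin : lin (p CC - 1) (p CD - 1) (p DC) (p DD) v = 0.
Proof.
  apply (lim_lin p x0 q v _ _ _ _ 0 1 Hv). intro n.
  apply (ces_bound p x0 q n _ _ _ _ (fun k => vround p x0 q k CC + vround p x0 q k CD) (1/2) 1).
  - intro k. rewrite Xc_S. unfold lin; ring.
  - intro k. pose proof (vround_mass p x0 q k). unfold lin in H.
    pose proof (vround_nonneg p x0 q Hp Hx Hq k CC). pose proof (vround_nonneg p x0 q Hp Hx Hq k CD).
    pose proof (vround_nonneg p x0 q Hp Hx Hq k DC). pose proof (vround_nonneg p x0 q Hp Hx Hq k DD).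
    apply Rabs_le. lra.
Qed.
End Gen.


Lemma Rabs_le_between a b : Rabs a <= b -> - b <= a <= b.
Proof. intro H. pose proof (Rle_abs a). pose proof (Rle_abs (-a)). rewrite Rabs_Ropp in H1. lra. Qed.

Lemma cluster (u : nat -> R) : (forall n, 0 <= u n <= 1) ->
  exists l, forall eps, 0 < eps -> forall N, exists n, (N <= n)%nat /\ Rabs (u n - l) < eps.
Proof.
  intro H. destruct (Bolzano_Weierstrass u _ (compact_P3 0 1) H) as [l Hl].
  exists l. intros eps Heps N.
  destruct (Hl (fun y => Rabs (y - l) < eps) N) as [n [Hn Hy]].
  { exists (mkposreal eps Heps). intros y Hy. exact Hy. }
  exists n; auto.
Qed.

Lemma cesaro_zero p x0 q o n : (forall k, vround p x0 q k o = 0) -> cesaro p x0 q n o = 0.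
Proof. intro H. unfold cesaro. rewrite sumR_zero by auto. unfold Rdiv; ring. Qed.

Section AllD.
Variables (p : outcome -> R).
Hypotheses (Hp : memory_one p).
Let q0 : list outcome -> R := fun _ => 0.
Lemma q0_ok : strategy_pattern q0.
Proof. intro; unfold q0; lra. Qed.

Lemma alld_exists : exists v, limit_distribution p 1 q0 v /\ v CC = 0 /\ v DC = 0 /\ v DD = 1 - v CD.
Proof.
  assert (Hx : 0 <= 1 <= 1) by lra.
  assert (H1 : forall k, vround p 1 q0 k CC = 0).
  { intro k. unfold vround. apply sumR_zero. intro h. unfold step, bern, q0; simpl. ring. }
  assert (H3 : forall k, vround p 1 q0 k DC = 0).
  { intro k. unfold vround. apply sumR_zero. intro h. unfold step, bern, q0; simpl. ring. }
  assert (Hm : forall n, cesaro p 1 q0 n DD = 1 - cesaro p 1 q0 n CD).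
  { intro n. pose proof (cesaro_mass p 1 q0 n). unfold lin in H.
    rewrite (cesaro_zero p 1 q0 CC n H1), (cesaro_zero p 1 q0 DC n H3) in H. lra. }
  destruct (cluster (fun n => cesaro p 1 q0 n CD)) as [l Hl].
  { intro n. split. apply cesaro_nonneg; auto using q0_ok.
    cbv beta. pose proof (Hm n).
    pose proof (cesaro_nonneg p 1 q0 Hp Hx q0_ok n DD). lra. }
  exists (fun o => match o with CD => l | DD => 1 - l | _ => 0 end).
  split; [|repeat split; simpl; lra].
  intros eps Heps N. destruct (Hl eps Heps N) as [n [Hn Hc]]. exists n; split; auto.
  intro o; destruct o.
  - rewrite (cesaro_zero p 1 q0 CC n H1). rewrite Rminus_0_r, Rabs_R0; lra.
  - exact Hc.
  - rewrite (cesaro_zero p 1 q0 DC n H3). rewrite Rminus_0_r, Rabs_R0; lra.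
  - rewrite Hm. replace (1 - cesaro p 1 q0 n CD - (1 - l)) with (- (cesaro p 1 q0 n CD - l)) by ring.
    rewrite Rabs_Ropp; exact Hc.
Qed.
End AllD.

Section Alt.
Variables (p : outcome -> R).
Hypotheses (Hp : memory_one p) (Ha : agreeable p).
Definition q1 (h : list outcome) : R := match h with [] => 1 | CC :: _ => 0 | _ :: _ => 1 end.
Lemma q1_ok : strategy_pattern q1.
Proof. intro h; destruct h as [|[] h]; simpl; lra. Qed.

Lemma alt_exists : exists v, limit_distribution p 1 q1 v /\ v DD = 0 /\ v CD = v CC /\ v DC = 1 - 2 * v CC.
Proof.
  assert (Hx : 0 <= 1 <= 1) by lra.
  unfold agreeable in Ha.
  assert (H4 : forall k, vround p 1 q1 k DD = 0).
  { intro k. unfold vround. apply sumR_zero. intro h.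
    destruct h as [|[] h]; unfold step, bern, q1; simpl; try rewrite Ha; ring. }
  assert (Hs : forall k, vround p 1 q1 (S k) CD = vround p 1 q1 k CC).
  { intro k. rewrite vround_S. unfold vround. apply sumR_ext. intro h.
    unfold step at 2 4 6 8, bern, q1; simpl. rewrite Ha. ring. }
  assert (H0 : vround p 1 q1 0 CD = 0).
  { unfold vround, step, bern, q1; simpl. ring. }
  assert (Hd : forall n, Rabs (cesaro p 1 q1 n CC - cesaro p 1 q1 n CD) <= 1 / INR (S n)).
  { intro n. pose proof (ces_bound p 1 q1 n 1 (-1) 0 0 (fun k => vround p 1 q1 k CD) (1/2) 1) as Hb.
    unfold lin in Hb. replace (cesaro p 1 q1 n CC - cesaro p 1 q1 n CD) with
      (1 * cesaro p 1 q1 n CC + -1 * cesaro p 1 q1 n CD + 0 * cesaro p 1 q1 n DC + 0 * cesaro p 1 q1 n DD - 0) by ring.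
    apply Hb.
    - intro k. destruct k. rewrite Hs, H0; ring. rewrite !Hs. ring.
    - intro k. pose proof (vround_mass p 1 q1 k). unfold lin in H.
      pose proof (vround_nonneg p 1 q1 Hp Hx q1_ok k CC). pose proof (vround_nonneg p 1 q1 Hp Hx q1_ok k CD).
      pose proof (vround_nonneg p 1 q1 Hp Hx q1_ok k DC). pose proof (vround_nonneg p 1 q1 Hp Hx q1_ok k DD).
      apply Rabs_le. lra. }
  assert (Hm : forall n, cesaro p 1 q1 n CC + cesaro p 1 q1 n CD + cesaro p 1 q1 n DC = 1).
  { intro n. pose proof (cesaro_mass p 1 q1 n). unfold lin in H.
    rewrite (cesaro_zero p 1 q1 DD n H4) in H. lra. }
  destruct (cluster (fun n => cesaro p 1 q1 n DC)) as [l Hl].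
  { intro n. split. apply cesaro_nonneg; auto using q1_ok. cbv beta. pose proof (Hm n).
    pose proof (cesaro_nonneg p 1 q1 Hp Hx q1_ok n CC). pose proof (cesaro_nonneg p 1 q1 Hp Hx q1_ok n CD). lra. }
  exists (fun o => match o with CC => (1 - l) / 2 | CD => (1 - l) / 2 | DC => l | DD => 0 end).
  split; [|repeat split; simpl; lra].
  intros eps Heps N. destruct (archimed_cor1 eps Heps) as [M [HM HM0]].
  destruct (Hl eps Heps (max N M)) as [n [Hn Hc]]. exists n; split; [lia|].
  assert (HMp : 0 < INR M) by (apply lt_0_INR; lia).
  assert (Hle : 1 / INR (S n) <= / INR M).
  { unfold Rdiv; rewrite Rmult_1_l. apply Rinv_le_contravar; auto. apply le_INR; lia. }
  specialize (Hd n). specialize (Hm n). apply Rabs_le_between in Hd. apply Rabs_def2 in Hc.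
  intro o; destruct o; simpl.
  - apply Rabs_def1; lra.
  - apply Rabs_def1; lra.
  - apply Rabs_def1; lra.
  - rewrite (cesaro_zero p 1 q1 DD n H4). rewrite Rminus_0_r, Rabs_R0; lra.
Qed.
End Alt.


Lemma div_le_iff x y z : 0 < y -> (x / y <= z <-> x <= z * y).
Proof. intro Hy. split; intro H.
  - apply Rmult_le_compat_r with (r := y) in H; [|lra]. field_simplify in H; lra.
  - apply Rmult_le_reg_r with y; auto. field_simplify; lra. Qed.
Lemma div_lt_iff x y z : 0 < y -> (x / y < z <-> x < z * y).
Proof. intro Hy. split; intro H.
  - apply Rmult_lt_compat_r with (r := y) in H; [|lra]. field_simplify in H; lra.
  - apply Rmult_lt_reg_r with y; auto. field_simplify; lra. Qed.

Lemma hpos x y : 0 < x -> 0 < x * y -> 0 < y.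
Proof. intros Hx H. destruct (Rlt_le_dec 0 y); auto. assert (x * y <= 0); [|lra].
  rewrite <- (Rmult_0_r x). apply Rmult_le_compat_l; lra. Qed.
Lemma hnonpos x y : 0 < x -> x * y <= 0 -> y <= 0.
Proof. intros Hx H. destruct (Rle_lt_dec y 0); auto. assert (0 < x * y); [|lra].
  apply Rmult_lt_0_compat; lra. Qed.
Lemma hneg x y : 0 < x -> x * y < 0 -> y < 0.
Proof. intros Hx H. destruct (Rlt_le_dec y 0); auto. assert (0 <= x * y); [|lra].
  apply Rmult_le_pos; lra. Qed.
Lemma pn x y : 0 < x -> y < 0 -> x * y < 0.
Proof. intros. replace (x*y) with (- (x * (-y))) by ring. assert (0 < x * -y); [apply Rmult_lt_0_compat|]; lra. Qed.
Lemma nn x y : 0 <= x -> 0 <= y -> 0 <= x * y.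
Proof. intros; apply Rmult_le_pos; auto. Qed.

Theorem theorem1p8 (Tp Rp Pp Sp : R) (p : outcome -> R) (a b g d : R) :
  Tp > Rp -> Rp > Pp -> Pp > Sp -> 2 * Rp > Tp + Sp ->
  memory_one p -> agreeable p ->
  press_dyson Tp Rp Pp Sp p a b g d ->
  ~ (a = 0 /\ b = 0 /\ g = 0 /\ d = 0) ->
  (nash_type Tp Rp Pp Sp p <-> Rmax (d / (Tp - Sp)) (d / (2 * Rp - (Tp + Sp))) <= a) /\
  (good Tp Rp Pp Sp p <-> Rmax (d / (Tp - Sp)) (d / (2 * Rp - (Tp + Sp))) < a).
Proof.
  intros HTR HRP HPS H2R Hp Ha [E1 [E2 [E3 E4]]] Hnz.
  assert (HA : 0 <= 1 - p CD) by (pose proof (Hp CD); lra).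
  assert (HB : 0 <= p DC) by (pose proof (Hp DC); lra).
  assert (HC : 0 <= p DD) by (pose proof (Hp DD); lra).
  pose proof Ha as Ha'. unfold agreeable in Ha'.
  assert (Eg : g = - (a + b) * Rp) by lra.
  set (K1 := (Rp - Sp) * (1 - p CD) - (Tp - Rp) * p DC).
  set (K2 := (Rp - Pp) * (1 - p CD) - (Tp - Rp) * p DD).
  assert (EK1 : K1 = (Tp - Sp) * (a * (2 * Rp - (Tp + Sp)) - d)).
  { unfold K1. replace (1 - p CD) with (- (p CD - 1)) by ring. rewrite E2, E3, Eg. ring. }
  assert (EK2 : K2 = (Rp - Pp) * (a * (Tp - Sp) - d)).
  { unfold K2. replace (1 - p CD) with (- (p CD - 1)) by ring. rewrite E2, E4, Eg. ring. }
  assert (HTS : 0 < Tp - Sp) by lra.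
  assert (H2 : 0 < 2 * Rp - (Tp + Sp)) by lra.
  assert (Cle : Rmax (d / (Tp - Sp)) (d / (2 * Rp - (Tp + Sp))) <= a <-> 0 <= K1 /\ 0 <= K2).
  { rewrite EK1, EK2. split.
    - intro H. pose proof (Rle_trans _ _ _ (Rmax_l _ _) H) as H1.
      pose proof (Rle_trans _ _ _ (Rmax_r _ _) H) as H3.
      apply div_le_iff in H1; auto. apply div_le_iff in H3; auto. split; nra.
    - intros [H1 H3]. apply Rmax_lub; apply div_le_iff; auto; nra. }
  assert (Clt : Rmax (d / (Tp - Sp)) (d / (2 * Rp - (Tp + Sp))) < a <-> 0 < K1 /\ 0 < K2).
  { rewrite EK1, EK2. split.
    - intro H. pose proof (Rle_lt_trans _ _ _ (Rmax_l _ _) H) as H1.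
      pose proof (Rle_lt_trans _ _ _ (Rmax_r _ _) H) as H3.
      apply div_lt_iff in H1; auto. apply div_lt_iff in H3; auto. split; nra.
    - intros [H1 H3]. unfold Rmax. destruct (Rle_dec _ _); apply div_lt_iff; auto; nra. }
  assert (Hdeg : ~ (1 - p CD = 0 /\ p DC = 0 /\ p DD = 0)).
  { intros [Z1 [Z2 Z3]]. apply Hnz.
    assert (Hab : (a + b) * (Pp - Rp) = 0) by (rewrite Z3 in E4; rewrite Eg in E4; lra).
    apply Rmult_integral in Hab. destruct Hab as [Hab|]; [|lra].
    assert (Hab2 : (a - b) * (Tp - Sp) = 0) by (rewrite Z2 in E3; lra).
    apply Rmult_integral in Hab2. destruct Hab2 as [Hab2|]; [|lra].
    assert (a = 0) by lra. assert (b = 0) by lra. subst. lra. }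
  destruct (alld_exists p Hp) as [vD [HvD [D1 [D3 D4]]]].
  assert (AkD := akin p 1 (fun _ => 0) Hp ltac:(lra) ltac:(intro; lra) vD HvD).
  unfold lin in AkD. rewrite D1, D3, D4, Ha' in AkD.
  destruct (alt_exists p Hp Ha) as [vA [HvA [A4 [A2 A3]]]].
  assert (AkA := akin p 1 q1 Hp ltac:(lra) q1_ok vA HvA).
  unfold lin in AkA. rewrite A4, A2, A3, Ha' in AkA.
  set (l := vD CD) in *. set (m := vA CC) in *.
  assert (ArD1 : (1 - p CD + p DD) * (sY Tp Rp Pp Sp vD - Rp) = - K2).
  { unfold sY. rewrite D1, D3, D4. fold l.
    assert (((1 - p CD + p DD) * (0 * Rp + l * Tp + 0 * Sp + (1 - l) * Pp - Rp) - - K2)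
       = - ((1 - 1) * 0 + (p CD - 1) * l + p DC * 0 + p DD * (1 - l)) * (Tp - Pp)) by (unfold K2; ring).
    rewrite AkD in H. lra. }
  assert (ArD2 : (1 - p CD + p DD) * (sX Tp Rp Pp Sp vD - Rp) = p DD * (Sp - Rp) + (1 - p CD) * (Pp - Rp)).
  { unfold sX. rewrite D1, D3, D4. fold l.
    assert (((1 - p CD + p DD) * (0 * Rp + l * Sp + 0 * Tp + (1 - l) * Pp - Rp)
       - (p DD * (Sp - Rp) + (1 - p CD) * (Pp - Rp)))
       = - ((1 - 1) * 0 + (p CD - 1) * l + p DC * 0 + p DD * (1 - l)) * (Sp - Pp)) by ring.
    rewrite AkD in H. lra. }
  assert (ArA1 : p DC * (sY Tp Rp Pp Sp vA - Rp) = - m * K1).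
  { unfold sY. rewrite A4, A2, A3. fold m.
    assert (p DC * (m * Rp + m * Tp + (1 - 2 * m) * Sp + 0 * Pp - Rp) - - m * K1
       = - (Rp - Sp) * ((1 - 1) * m + (p CD - 1) * m + p DC * (1 - 2 * m) + p DD * 0)) by (unfold K1; ring).
    rewrite AkA in H. lra. }
  assert (ArA2 : p DC * (sX Tp Rp Pp Sp vA - Rp) = m * (p DC * (Sp - Rp) + (1 - p CD) * (Tp - Rp))).
  { unfold sX. rewrite A4, A2, A3. fold m.
    assert (p DC * (m * Rp + m * Sp + (1 - 2 * m) * Tp + 0 * Pp - Rp)
       - m * (p DC * (Sp - Rp) + (1 - p CD) * (Tp - Rp))
       = (Tp - Rp) * ((1 - 1) * m + (p CD - 1) * m + p DC * (1 - 2 * m) + p DD * 0)) by ring.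
    rewrite AkA in H. lra. }
  assert (Hm : 0 < p DC -> 0 < m).
  { intro Hb. destruct (Rlt_le_dec 0 m) as [|Hm0]; auto. exfalso.
    assert (0 <= (1 - p CD) * (- m)) by (apply nn; lra).
    assert (p DC <= p DC * (1 - 2 * m)).
    { replace (p DC * (1 - 2 * m)) with (p DC + 2 * (p DC * (- m))) by ring.
      assert (0 <= p DC * (- m)) by (apply nn; lra). lra. }
    lra. }
  assert (Suff : forall x0 q v, 0 <= x0 <= 1 -> strategy_pattern q -> limit_distribution p x0 q v ->
     (1 - p CD) * (sY Tp Rp Pp Sp v - Rp) = - v DC * K1 - v DD * K2 /\
     0 <= v CC /\ 0 <= v CD /\ 0 <= v DC /\ 0 <= v DD /\ v CC + v CD + v DC + v DD = 1 /\
     (1 - p CD) * v CD = p DC * v DC + p DD * v DD).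
  { intros x0 q v Hx Hq Hv.
    pose proof (akin p x0 q Hp Hx Hq v Hv) as Ak. pose proof (lim_mass p x0 q v Hv) as Ms.
    unfold lin in Ak, Ms. rewrite Ha' in Ak.
    pose proof (lim_nonneg' p x0 q Hp Hx Hq v Hv) as Nn.
    repeat split; try apply Nn; try lra.
    unfold sY.
    assert ((1 - p CD) * (v CC * Rp + v CD * Tp + v DC * Sp + v DD * Pp - Rp) - (- v DC * K1 - v DD * K2)
      = - (Tp - Rp) * ((1 - 1) * v CC + (p CD - 1) * v CD + p DC * v DC + p DD * v DD)
        + (1 - p CD) * Rp * (1 * v CC + 1 * v CD + 1 * v DC + 1 * v DD - 1)) by (unfold K1, K2; ring).
    rewrite Ak, Ms in H. lra. }
  assert (Degen : 0 <= K1 -> 0 <= K2 -> 0 < 1 - p CD).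
  { intros HK1 HK2. destruct (Rlt_le_dec 0 (1 - p CD)) as [|HA0]; auto. exfalso.
    apply Hdeg. assert (E0 : 1 - p CD = 0) by lra. unfold K1, K2 in *. rewrite E0 in HK1, HK2.
    assert ((Tp - Rp) * p DC <= 0) by lra. assert ((Tp - Rp) * p DD <= 0) by lra.
    apply hnonpos in H; [|lra]. apply hnonpos in H0; [|lra]. lra. }
  assert (Nash : nash_type Tp Rp Pp Sp p <-> 0 <= K1 /\ 0 <= K2).
  { split.
    - intros [_ HN]. split.
      + destruct (Rle_lt_dec 0 K1) as [|HK]; auto. exfalso.
        assert (Hb : 0 < p DC).
        { apply (hpos (Tp - Rp)); [lra|]. unfold K1 in HK.
          assert (0 <= (Rp - Sp) * (1 - p CD)) by (apply nn; lra). lra. }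
        pose proof (Hm Hb).
        specialize (HN 1 q1 vA ltac:(lra) q1_ok HvA).
        assert (0 < p DC * (sY Tp Rp Pp Sp vA - Rp)).
        { rewrite ArA1. replace (- m * K1) with (m * (- K1)) by ring. apply Rmult_lt_0_compat; lra. }
        apply hpos in H0; [|lra]. specialize (HN ltac:(lra)). lra.
      + destruct (Rle_lt_dec 0 K2) as [|HK]; auto. exfalso.
        assert (Hc : 0 < p DD).
        { apply (hpos (Tp - Rp)); [lra|]. unfold K2 in HK.
          assert (0 <= (Rp - Pp) * (1 - p CD)) by (apply nn; lra). lra. }
        specialize (HN 1 (fun _ => 0) vD ltac:(lra) ltac:(intro; lra) HvD).
        assert (0 < (1 - p CD + p DD) * (sY Tp Rp Pp Sp vD - Rp)) by (rewrite ArD1; lra).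
        apply hpos in H; [|lra]. specialize (HN ltac:(lra)). lra.
    - intros [HK1 HK2]. split; auto. intros x0 q v Hx Hq Hv Hs.
      destruct (Suff x0 q v Hx Hq Hv) as [S1 [N1 [N2 [N3 [N4 _]]]]].
      pose proof (Degen HK1 HK2) as HA0.
      assert ((1 - p CD) * (sY Tp Rp Pp Sp v - Rp) <= 0).
      { rewrite S1. assert (0 <= v DC * K1) by (apply nn; lra). assert (0 <= v DD * K2) by (apply nn; lra). lra. }
      apply hnonpos in H; lra. }
  split.
  { rewrite Nash, Cle. tauto. }
  rewrite Clt. split.
  - intro HG. assert (HN : nash_type Tp Rp Pp Sp p).
    { destruct HG as [_ HG]. split; auto. intros x0 q v Hx Hq Hv Hs. apply (HG x0 q v Hx Hq Hv Hs). }
    apply Nash in HN. destruct HN as [HK1 HK2].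
    pose proof (Degen HK1 HK2) as HA0.
    destruct HG as [_ HG]. split.
    + destruct HK1 as [|HK]; auto. exfalso.
      assert (Hb : 0 < p DC).
      { apply (hpos (Tp - Rp)); [lra|]. unfold K1 in HK.
        assert (0 < (Rp - Sp) * (1 - p CD)) by (apply Rmult_lt_0_compat; lra). lra. }
      pose proof (Hm Hb).
      assert (Hs : sY Tp Rp Pp Sp vA = Rp).
      { rewrite <- HK in ArA1. assert (p DC * (sY Tp Rp Pp Sp vA - Rp) = 0) by lra.
        apply Rmult_integral in H0; lra. }
      destruct (HG 1 q1 vA ltac:(lra) q1_ok HvA ltac:(lra)) as [_ Hx].
      assert (Hneg : (Rp - Sp) * (p DC * (Sp - Rp) + (1 - p CD) * (Tp - Rp)) =
         p DC * (Tp - Sp) * (Tp + Sp - 2 * Rp)).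
      { assert ((Rp - Sp) * (1 - p CD) = (Tp - Rp) * p DC) by (unfold K1 in HK; lra).
        replace ((Rp - Sp) * (p DC * (Sp - Rp) + (1 - p CD) * (Tp - Rp))) with
          (p DC * (Sp - Rp) * (Rp - Sp) + ((Rp - Sp) * (1 - p CD)) * (Tp - Rp)) by ring.
        rewrite H0. ring. }
      assert (p DC * (Tp - Sp) * (Tp + Sp - 2 * Rp) < 0).
      { apply pn; [apply Rmult_lt_0_compat|]; lra. }
      rewrite <- Hneg in H0. apply hneg in H0; [|lra].
      rewrite Hx in ArA2. pose proof (pn _ _ H H0). 
      replace (p DC * (Rp - Rp)) with 0 in ArA2 by ring. lra.
    + destruct HK2 as [|HK]; auto. exfalso.
      assert (Hc : 0 < p DD).
      { apply (hpos (Tp - Rp)); [lra|]. unfold K2 in HK.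
        assert (0 < (Rp - Pp) * (1 - p CD)) by (apply Rmult_lt_0_compat; lra). lra. }
      assert (Hs : sY Tp Rp Pp Sp vD = Rp).
      { rewrite <- HK in ArD1. assert ((1 - p CD + p DD) * (sY Tp Rp Pp Sp vD - Rp) = 0) by lra.
        apply Rmult_integral in H; lra. }
      destruct (HG 1 (fun _ => 0) vD ltac:(lra) ltac:(intro; lra) HvD ltac:(lra)) as [_ Hx].
      rewrite Hx in ArD2. replace ((1 - p CD + p DD) * (Rp - Rp)) with 0 in ArD2 by ring.
      assert (0 < p DD * (Rp - Sp)) by (apply Rmult_lt_0_compat; lra).
      assert (0 < (1 - p CD) * (Rp - Pp)) by (apply Rmult_lt_0_compat; lra). lra.
  - intros [HK1 HK2]. split; auto. intros x0 q v Hx Hq Hv Hs.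
    destruct (Suff x0 q v Hx Hq Hv) as [S1 [N1 [N2 [N3 [N4 [Ms Ak]]]]]].
    assert (HA0 : 0 < 1 - p CD) by (apply Degen; lra).
    assert (0 <= (1 - p CD) * (sY Tp Rp Pp Sp v - Rp)) by (apply nn; lra).
    assert (0 <= v DC * K1) by (apply nn; lra). assert (0 <= v DD * K2) by (apply nn; lra).
    assert (Z3 : v DC * K1 = 0) by lra. assert (Z4 : v DD * K2 = 0) by lra.
    apply Rmult_integral in Z3. apply Rmult_integral in Z4.
    assert (W3 : v DC = 0) by (destruct Z3; lra). assert (W4 : v DD = 0) by (destruct Z4; lra).
    rewrite W3, W4 in Ak. assert (Z2 : (1 - p CD) * v CD = 0) by lra.
    apply Rmult_integral in Z2. assert (W2 : v CD = 0) by (destruct Z2; lra). assert (W1 : v CC = 1) by lra.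
    unfold sY, sX. rewrite W1, W2, W3, W4. split; ring.
Qed.
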